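(* Let $X$ be a unital Banach algebra with unit $e$, let $\theta\in X$, and let $M_\theta$ be either the left multiplication operator $y\mapsto\theta y$ or the right multiplication operator $y\mapsto y\theta$ on $X$. Then $M_\theta$ is recurrent if and only if $M_\theta$ is hyper-recurrent. Moreover, in this case $G(X)\subset\mathrm{Hr}(M_\theta)$, where $G(X)$ is the group of invertible elements of $X$.
   Context: For a bounded operator $T$ on a Banach space $X$: $x$ is recurrent if $T^{\omega_n}x\to x$ for some strictly increasing sequence $(\omega_n)$ of positive integers; $\mathrm{Rec}(T)$ is the set of recurrent vectors and $T$ is recurrent if $\mathrm{Rec}(T)$ is dense. $\mathfrak{C}$ is the set of strictly increasing sequences $\omega$ with $T^{\omega_n}x\to x$ for some $x\ne0$; $\mathfrak{L}(\omega)=\{x:T^{\omega_n}x\to x\}$. $\mathrm{Hr}(T)$ is the set of $x\in\mathrm{Rec}(T)$ such that $\mathfrak{L}(\omega)$ is dense for every $\omega\in\mathfrak{C}$ with $x\in\mathfrak{L}(\omega)$; a recurrent $T$ is hyper-recurrent if $\mathrm{Hr}(T)\ne\emptyset$. *)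

(* Defs.v *)
From HB Require Import structures.
From mathcomp Require Import all_boot all_order all_algebra.
From mathcomp Require Import all_classical all_reals all_analysis.
Set Implicit Arguments. Unset Strict Implicit. Unset Printing Implicit Defensive.
Import Order.TTheory GRing.Theory Num.Theory.
Import numFieldNormedType.Exports.
Local Open Scope classical_set_scope.
Local Open Scope ring_scope.

Section Recurrence.
Context {K : numFieldType} {X : normedModType K}.

Definition incr_pos_seq (w : nat -> nat) : Prop :=
  {homo w : m n / (m < n)%N} /\ (forall n, (0 < w n)%N).

Definition Lset (T : X -> X) (w : nat -> nat) : set X :=
  [set x | (fun n => iter (w n) T x) @ \oo --> x].

Definition recurrent_vector (T : X -> X) (x : X) : Prop :=
  exists w, incr_pos_seq w /\ Lset T w x.

Definition Rec (T : X -> X) : set X := [set x | recurrent_vector T x].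

Definition recurrent (T : X -> X) : Prop := dense (Rec T).

Definition Cset (T : X -> X) : set (nat -> nat) :=
  [set w | incr_pos_seq w /\ exists x, x != 0 /\ Lset T w x].

Definition Hr (T : X -> X) : set X :=
  [set x | Rec T x /\
     forall w, Cset T w -> Lset T w x -> dense (Lset T w)].

Definition hyper_recurrent (T : X -> X) : Prop :=
  recurrent T /\ Hr T !=set0.
End Recurrence.

Record unital_banach_algebra (K : numFieldType) (X : completeNormedModType K)
    (mul : X -> X -> X) (e : X) : Prop := {
  ba_mulA : forall x y z, mul x (mul y z) = mul (mul x y) z;
  ba_mul1x : forall x, mul e x = x;
  ba_mulx1 : forall x, mul x e = x;
  ba_mulDl : forall x y z, mul (x + y) z = mul x z + mul y z;
  ba_mulDr : forall x y z, mul x (y + z) = mul x y + mul x z;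
  ba_mulZl : forall (a : K) x y, mul (a *: x) y = a *: mul x y;
  ba_mulZr : forall (a : K) x y, mul x (a *: y) = a *: mul x y;
  ba_norm_mul : forall x y, `|mul x y| <= `|x| * `|y|
}.

Definition invertibles {K : numFieldType} {X : completeNormedModType K}
    (mul : X -> X -> X) (e : X) : set X :=
  [set x | exists y, mul x y = e /\ mul y x = e].

Definition mult_op {X : Type} (mul : X -> X -> X) (left : bool) (theta : X)
    : X -> X :=
  fun y => if left then mul theta y else mul y theta.

(* Main.v *)
Require Import Defs.
From HB Require Import structures.
From mathcomp Require Import all_boot all_order all_algebra.
From mathcomp Require Import all_classical all_reals all_analysis.
Import Order.TTheory GRing.Theory Num.Theory.
Import numFieldNormedType.Exports.
Local Open Scope classical_set_scope.
Local Open Scope ring_scope.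

Section S.
Variables (K : numFieldType) (X : completeNormedModType K)
  (mul : X -> X -> X) (e : X) (HX : unital_banach_algebra mul e).

Lemma mul0l z : mul 0 z = 0.
Proof.
have := ba_mulDl HX 0 0 z; rewrite addr0.
by move/(congr1 (fun t => t - mul 0 z)); rewrite addrK subrr.
Qed.

Lemma mul0r z : mul z 0 = 0.
Proof.
have := ba_mulDr HX z 0 0; rewrite addr0.
by move/(congr1 (fun t => t - mul z 0)); rewrite addrK subrr.
Qed.

Lemma mulBl x y z : mul (x - y) z = mul x z - mul y z.
Proof.
have hN : mul (- y) z = - mul y z.
  have := ba_mulDl HX y (-y) z; rewrite subrr mul0l => /esym/eqP.
  by rewrite addrC addr_eq0 => /eqP.
by rewrite (ba_mulDl HX) hN.
Qed.

Lemma mulBr x y z : mul z (x - y) = mul z x - mul z y.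
Proof.
have hN : mul z (- y) = - mul z y.
  have := ba_mulDr HX z y (-y); rewrite subrr mul0r => /esym/eqP.
  by rewrite addrC addr_eq0 => /eqP.
by rewrite (ba_mulDr HX) hN.
Qed.

Lemma cvg_bound (u v : nat -> X) l m (c : K) : 0 < c ->
  (forall n, `|u n - l| <= c * `|v n - m|) -> v @ \oo --> m -> u @ \oo --> l.
Proof.
move=> c0 hb /cvgrPdist_lt hv; apply/cvgrPdist_lt => eps eps0.
have := hv (eps / c) (divr_gt0 eps0 c0); apply: filterS => n hn.
rewrite distrC; apply: (le_lt_trans (hb n)).
by rewrite -ltr_pdivlMl // mulrC distrC.
Qed.

Variable theta : X.
Let T := fun y => mul theta y.
Let P k := iter k T e.

Lemma iterP k z : iter k T z = mul (P k) z.
Proof.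
elim: k => [|k IH] /=; first by rewrite (ba_mul1x HX).
by rewrite /T IH (ba_mulA HX).
Qed.

Lemma allL w : (fun n => P (w n)) @ \oo --> e -> forall z, Lset T w z.
Proof.
move=> h z; rewrite /Lset /=.
apply: (@cvg_bound _ _ _ _ (`|z| + 1) _ _ h); first by rewrite ltr_wpDl.
move=> n; rewrite iterP -{2}(ba_mul1x HX z) -mulBl.
apply: (le_trans (ba_norm_mul HX _ _)).
by rewrite mulrC ler_wpM2r // lerDl.
Qed.

Lemma near_e w y : `|e - y| < 2^-1 -> Lset T w y -> (fun n => P (w n)) @ \oo --> e.
Proof.
move=> hy hL.
apply: (@cvg_bound _ _ _ _ 2 _ _ hL) => // n.
rewrite iterP.
set a := P (w n).
have eq1 : a - e = (mul a y - y) + mul (a - e) (e - y).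
  rewrite mulBr !mulBl !(ba_mulx1 HX) (ba_mul1x HX).
  by rewrite [RHS]addrC subrK.
have h1 : `|a - e| <= `|mul a y - y| + `|a - e| * `|e - y|.
  rewrite {1}eq1; apply: (le_trans (ler_normD _ _)).
  by rewrite lerD2l (ba_norm_mul HX).
have h2 : `|a - e| * `|e - y| <= `|a - e| / 2.
  by rewrite ler_wpM2l // ltW.
have h3 : `|a - e| <= `|mul a y - y| + `|a - e| / 2.
  by apply: (le_trans h1); rewrite lerD2l.
rewrite {1}(splitr `|a - e|) lerD2r in h3.
by rewrite mulrC -ler_pdivrMr.
Qed.

Lemma dense_setT : dense (@setT X).
Proof. by move=> O O0 _; rewrite setIT. Qed.

Lemma main_left : recurrent T -> invertibles mul e `<=` Hr T.
Proof.
move=> hrec.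
have [y [hy [w [hw hLy]]]] : exists y, `|e - y| < 2^-1 /\ Rec T y.
  have := hrec (ball e 2^-1) _ (ball_open _ _).
  case=> [|y [hb hR]]; last by exists y; split => //; move: hb; rewrite -ball_normE.
  by exists e; apply: ballxx; rewrite invr_gt0.
have he := @near_e w y hy hLy.
move=> x [x' [hx1 hx2]]; split.
  by exists w; split => //; apply: allL _ he x.
move=> w' [hw' _] hLx.
have h : (fun n => P (w' n)) @ \oo --> e.
  apply: (@cvg_bound _ _ _ _ (`|x'| + 1) _ _ hLx); first by rewrite ltr_wpDl.
  move=> n; rewrite iterP.
  have -> : P (w' n) - e = mul (mul (P (w' n)) x - x) x'.
    by rewrite mulBl -(ba_mulA HX) hx1 (ba_mulx1 HX).
  apply: (le_trans (ba_norm_mul HX _ _)).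
  by rewrite mulrC ler_wpM2r // lerDl.
have -> : Lset T w' = setT by apply/funext => z; apply/propext; split => // _; apply: allL _ h z.
exact: dense_setT.
Qed.

End S.

Lemma op_alg (K : numFieldType) (X : completeNormedModType K)
  (mul : X -> X -> X) (e : X) (HX : unital_banach_algebra mul e) :
  unital_banach_algebra (fun a b => mul b a) e.
Proof.
split.
- by move=> x y z; rewrite (ba_mulA HX).
- exact: (ba_mulx1 HX).
- exact: (ba_mul1x HX).
- by move=> x y z; rewrite (ba_mulDr HX).
- by move=> x y z; rewrite (ba_mulDl HX).
- by move=> a x y; rewrite (ba_mulZr HX).
- by move=> a x y; rewrite (ba_mulZl HX).
- by move=> x y; rewrite mulrC (ba_norm_mul HX).
Qed.

Theorem theorem5p5 (K : numFieldType) (X : completeNormedModType K)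
    (mul : X -> X -> X) (e : X) (HX : unital_banach_algebra mul e)
    (theta : X) (left : bool) :
  (recurrent (mult_op mul left theta) <->
     hyper_recurrent (mult_op mul left theta)) /\
  (recurrent (mult_op mul left theta) ->
     invertibles mul e `<=` Hr (mult_op mul left theta)).
Proof.
have key : recurrent (mult_op mul left theta) ->
     invertibles mul e `<=` Hr (mult_op mul left theta).
  case: left.
    by move=> h; apply: (main_left _ _ _ _ HX theta h).
  move=> h x [x' [h1 h2]].
  exact (main_left _ _ _ _ (op_alg _ _ _ _ HX) theta h x (ex_intro _ x' (conj h2 h1))).
split => //; split => [h|[]//]; split => //.
exists e; apply: (key h e); exists e; split; exact: (ba_mul1x HX).
Qed.
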